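(* Let $p,q\in\mathbb{R}$ with $q<0$ and $p<0$, and let $D=\frac{p^3}{27}+\frac{q^2}{4}$. Let $x_1,x_2,x_3\in\mathbb{C}$ be the solutions of $x^3+px+q=0$. Then: (1) if $D\ge0$, $|x_i|\le\frac83+\frac13|q|+\frac1{12}q^2+\frac1{81}p^3$ for each $i$; (2) if $D<0$, $|x_i|\le 3+\frac16q^2+\frac1{81}|p|^3$ for each $i$.
   Context: The solutions are those given by Cardano's formula: $x_1=z_1+z_2$, $x_2=z_1+\lambda z_2$, $x_3=z_1+\lambda^2z_2$, with $z_1=\sqrt[3]{-\frac q2+\sqrt{D}}$, $z_2=\sqrt[3]{-\frac q2-\sqrt{D}}$ and $\lambda^3=1$. *)

(* Defs.v *)
From Stdlib Require Import Reals.
From Coquelicot Require Export Coquelicot.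
Open Scope R_scope.

Definition cubicD (p q : R) : R := p ^ 3 / 27 + q ^ 2 / 4.

Definition is_cubic_root (p q : R) (x : C) : Prop :=
  (x * x * x + RtoC p * x + RtoC q)%C = RtoC 0.

(* Main.v *)
Require Import Defs.
From Stdlib Require Import Reals.
From Coquelicot Require Import Coquelicot.
From Stdlib Require Import Lra Psatz.
Open Scope R_scope.

Lemma sqrt_le_B (u B : R) : 0 <= B -> u <= B ^ 2 -> sqrt u <= B.
Proof.
  intros HB Hu. rewrite <- (sqrt_pow2 B HB). apply sqrt_le_1_alt. exact Hu.
Qed.

Lemma root_eqs p q a b : is_cubic_root p q (a, b) ->
  a^3 - 3*a*b^2 + p*a + q = 0 /\ b*(3*a^2 - b^2 + p) = 0.
Proof.
  intros H. unfold is_cubic_root, Cmult, Cplus, RtoC in H; simpl in H.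
  injection H; intros H0 H1. split; nra.
Qed.

Lemma cmod_ab a b : Cmod (a, b) = sqrt (a^2 + b^2).
Proof. reflexivity. Qed.

Lemma complex_case p q a b : q < 0 -> p < 0 -> b <> 0 ->
  a^3 - 3*a*b^2 + p*a + q = 0 -> b*(3*a^2 - b^2 + p) = 0 ->
  exists t, 0 < t /\ 2 * t^3 <= - q /\ sqrt (a^2 + b^2) <= 2 * t.
Proof.
  intros hq hp hb H1 H2.
  assert (Hb2 : b^2 = 3*a^2 + p).
  { apply Rmult_integral in H2. destruct H2 as [H2|H2]; [contradiction|lra]. }
  assert (Hbpos : 0 < b^2) by (apply pow2_gt_0; exact hb).
  assert (Hq : q = 2*a*(4*a^2+p)) by nra.
  assert (Ha : a < 0).
  { destruct (Rlt_or_le a 0) as [h|h]; auto. nra. }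
  exists (-a). split; [lra|]. split.
  - assert (a^2 <= 4*a^2+p) by nra. nra.
  - apply sqrt_le_B; [lra|]. nra.
Qed.

Lemma cube_lt u v : 0 < v -> v < u -> v^3 < u^3.
Proof. intros. assert (0 < u - v) by lra. assert (0 < u^2 + u*v + v^2) by nra. nra. Qed.

Lemma bound1 t : 0 < t -> 2*t <= 8/3 + 2*t^3/3.
Proof. intros. assert (0 <= (t-1)^2*(t+2)) by (apply Rmult_le_pos; [apply pow2_ge_0 | lra]). nra. Qed.

Lemma bound2 t : 0 < t -> 2*t <= 3 + 2*t^6/3.
Proof.
  intros ht. destruct (Rle_or_lt t (3/2)) as [h|h].
  - assert (0 <= t^6) by (apply pow_le; lra). lra.
  - assert (t^5 >= 3) by (assert (t^2 >= 2) by nra; assert (t^4 >= 4) by nra; nra).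
    nra.
Qed.

Theorem mainTheorem10 (p q : R) (hq : q < 0) (hp : p < 0) :
  (0 <= cubicD p q ->
     forall x : C, is_cubic_root p q x ->
       Cmod x <= 8 / 3 + 1 / 3 * Rabs q + 1 / 12 * q ^ 2 + 1 / 81 * p ^ 3) /\
  (cubicD p q < 0 ->
     forall x : C, is_cubic_root p q x ->
       Cmod x <= 3 + 1 / 6 * q ^ 2 + 1 / 81 * Rabs p ^ 3).
Proof.
  unfold cubicD.
  rewrite (Rabs_left q hq), (Rabs_left p hp).
  set (Q := - q). set (s := - p).
  assert (HQ : 0 < Q) by (unfold Q; lra).
  assert (Hs : 0 < s) by (unfold s; lra).
  assert (Eq : q = - Q) by (unfold Q; lra).
  assert (Ep : p = - s) by (unfold s; lra).
  clearbody Q s. subst q p.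
  split.
  - intros HD [a b] Hr. rewrite cmod_ab.
    destruct (root_eqs _ _ _ _ Hr) as [H1 H2].
    assert (HD' : 4 * s^3 <= 27 * Q^2) by nra.
    destruct (Req_dec b 0) as [hb|hb].
    + subst b. replace (a^2 + 0^2) with (a^2) by field.
      replace (a^2) with (Rsqr a) by (unfold Rsqr; ring). rewrite sqrt_Rsqr_abs.
      destruct (Rle_or_lt 0 a) as [ha|ha].
      * rewrite Rabs_right by lra.
        assert (H3 : a^3 <= 4*Q).
        { destruct (Rle_or_lt (a^3) (4*Q)) as [h|h]; auto.
          exfalso.
          assert (ha' : 0 < a) by (destruct ha as [ha|ha]; auto; subst a; nra).
          assert (s*a > 3*a^3/4) by nra.
          assert (s > 3*a^2/4) by nra.
          assert (s^3 > 27*a^6/64).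
          { assert (0 < 3*a^2/4) by nra.
            replace (27*a^6/64) with ((3*a^2/4)^3) by field.
            apply cube_lt; lra. }
          nra. }
        nra.
      * rewrite Rabs_left by lra.
        set (y := -a). assert (Hy : 0 < y) by (unfold y; lra).
        assert (Ea : a = -y) by (unfold y; lra). clearbody y. subst a.
        assert (HQy : Q = s*y - y^3) by nra.
        assert (Hsy : s > y^2) by nra.
        assert (Hid : 4*s^3 - 27*Q^2 = (s - 3*y^2)^2*(4*s - 3*y^2)) by (rewrite HQy; ring).
        assert (Hs3 : (s - 3*y^2)^2 <= 0).
        { assert (0 < 4*s - 3*y^2) by nra.
          destruct (Rle_or_lt ((s - 3*y^2)^2) 0); auto. nra. }
        assert (s = 3*y^2) by nra.
        subst s. assert (Q = 2*y^3) by nra. subst Q. nra.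
    + destruct (complex_case (-s) (-Q) a b) as [t [ht [h1 h2]]]; try lra; auto.
      eapply Rle_trans; [exact h2|].
      pose proof (bound1 t ht). nra.
  - intros HD [a b] Hr. rewrite cmod_ab.
    destruct (root_eqs _ _ _ _ Hr) as [H1 H2].
    assert (Hs3 : 0 <= s^3) by (apply pow_le; lra).
    destruct (Req_dec b 0) as [hb|hb].
    + subst b. replace (a^2 + 0^2) with (a^2) by field.
      replace (a^2) with (Rsqr a) by (unfold Rsqr; ring). rewrite sqrt_Rsqr_abs.
      set (y := Rabs a).
      assert (Hy0 : 0 <= y) by (unfold y; apply Rabs_pos).
      assert (Hy : y^3 <= s*y + Q).
      { unfold y. destruct (Rle_or_lt 0 a).
        - rewrite Rabs_right by lra. nra.
        - rewrite Rabs_left by lra. nra. }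
      clearbody y.
      destruct (Rle_or_lt y 3) as [h|h].
      * assert (0 <= Q^2) by nra. nra.
      * destruct (Rle_or_lt (s*y) (y^3/2)) as [h'|h'].
        --
           assert (Q >= y^3/2) by lra.
           assert (Q^2 >= y^6/4).
           { assert (0 <= y^3/2) by (apply Rmult_le_pos; [apply pow_le|]; lra). nra. }
           assert (y^5 >= 243) by (assert (y^2>=9) by nra; assert (y^4>=81) by nra; nra).
           nra.
        -- assert (s > y^2/2) by nra.
           assert (s^3 >= y^6/8).
           { assert (0 < y^2/2) by nra.
             replace (y^6/8) with ((y^2/2)^3) by field.
             left. apply cube_lt; lra. }
           assert (y^5 >= 243) by (assert (y^2>=9) by nra; assert (y^4>=81) by nra; nra).
           assert (y <= 3 + y^6/648).
           { destruct (Rle_or_lt y 4) as [h4|h4].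
             - assert (y^6 >= 243*y) by nra. nra.
             - assert (y^5 >= 1024) by (assert (y^2>=16) by nra; assert (y^4>=256) by nra; nra).
               assert (y^6 >= 1024*y) by nra. nra. }
           assert (0 <= Q^2) by nra. nra.
    + destruct (complex_case (-s) (-Q) a b) as [t [ht [h1 h2]]]; try lra; auto.
      eapply Rle_trans; [exact h2|].
      pose proof (bound2 t ht).
      assert (Q^2 >= 4*t^6).
      { assert (0 <= 2*t^3) by (assert (0 <= t^3) by (apply pow_le; lra); lra).
        replace (4*t^6) with ((2*t^3)^2) by field. nra. }
      nra.
Qed.
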